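(* Let $n,m,k$ be nonnegative integers with $m\le n$ and $k\ge 1$. If $p$ is a prime with $p>3$, then $$\binom{np^k}{mp^k}\equiv \binom{np^{\lfloor (k-1)/3\rfloor}}{mp^{\lfloor (k-1)/3\rfloor}}\pmod{p^k}.$$ Furthermore, $$\binom{n\cdot 2^k}{m\cdot 2^k}\equiv \binom{n\cdot 2^{\lfloor k/2\rfloor}}{m\cdot 2^{\lfloor k/2\rfloor}}\pmod{2^k}\quad\text{and}\quad \binom{n\cdot 3^k}{m\cdot 3^k}\equiv \binom{n\cdot 3^{\lfloor (k-1)/2\rfloor}}{m\cdot 3^{\lfloor (k-1)/2\rfloor}}\pmod{3^k}.$$
   Context: $\lfloor a\rfloor$ denotes the greatest integer less than or equal to $a$. *)

(* Defs.v *)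
From mathcomp Require Import all_boot.

(* Main.v *)
Require Import Defs.
From mathcomp Require Import all_boot all_algebra.
From mathcomp Require Import ring zify.
Import GRing.Theory.
Set Implicit Arguments. Unset Strict Implicit. Unset Printing Implicit Defensive.
Section PE.
Local Open Scope ring_scope.
Lemma prod_eps (R : comUnitRingType) (I : Type) (r : seq I) (P : pred I)
  (a : I -> R) (e : R) : e * e = 0 -> (forall i, P i -> a i \is a GRing.unit) ->
  \prod_(i <- r | P i) (a i + e) =
  (\prod_(i <- r | P i) a i) * (1 + e * \sum_(i <- r | P i) (a i)^-1).
Proof.
move=> e2 ua; elim: r => [|x r IH]; first by rewrite !big_nil mulr0 addr0 mulr1.
rewrite !big_cons; case: ifP => Px; last exact: IH.
rewrite IH.
set A := \prod_(i <- r | P i) a i; set S := \sum_(i <- r | P i) (a i)^-1.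
have h := mulrV (ua x Px); set w := (a x)^-1 in h *.
transitivity (a x * A * (1 + e * (w + S)) + e * A * (1 - a x * w) + e * e * A * S);
  first by ring.
by rewrite h e2 subrr !(mulr0, mul0r, addr0).
Qed.

End PE.

Definition U p N := \prod_(0 <= j < N * p | ~~ (p %| j.+1)) j.+1.
Definition g p q c := \prod_(1 <= j < q | ~~ (p %| j)) (c * q + j).

Lemma Dfact p N : 0 < p -> \prod_(0 <= j < N*p | p %| j.+1) j.+1 = p^N * N`!.
Proof.
case: p => // p' _; set p := p'.+1.
elim: N => [|N IH]; first by rewrite mul0n big_geq.
rewrite mulSn addnC (big_cat_nat _ (leq_addr _ _)) //= IH.
rewrite /p addnS big_mkcond big_nat_recr ?leq_addr //= -big_mkcond /=.
rewrite -addnS dvdn_addl ?dvdnn ?dvdn_mull //.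
rewrite big_nat_cond big1 ?mul1n; last first.
  move=> j /andP[/andP[h1 h2] hd].
  move: hd; rewrite -(subnKC h1) -addnS dvdn_addr ?dvdn_mull //.
  rewrite gtnNdvd //; lia.
rewrite factS expnS; ring.
Qed.

Lemma fact_split p N : 0 < p -> (N*p)`! = p^N * N`! * U p N.
Proof.
move=> p0; rewrite fact_prod big_add1 /= (bigID (fun j => p %| j.+1)) /=.
by rewrite Dfact.
Qed.

Lemma U_block p L c : prime p -> 0 < L ->
  U p (c.+1 * L) = U p (c * L) * g p (L * p) c.
Proof.
move=> pp L0; have p0 := prime_gt0 pp.
set q := L * p; have q0 : 0 < q by rewrite muln_gt0 L0.
have pq : p %| q by rewrite dvdn_mull.
rewrite /U mulSnr mulnDl -mulnA -/q (big_cat_nat _ (leq_addr _ _)) //=.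
congr (_ * _).
rewrite -{1}[c*q]add0n big_addn addKn /g.
rewrite [RHS](_ : _ = \prod_(1 <= j < q.+1 | ~~ (p %| j)) (c*q+j)).
  rewrite big_add1 /=; apply: eq_big => i; first by rewrite addnC -addnS dvdn_addr // dvdn_mull.
  by move=> _; rewrite addnC addnS.
by rewrite [RHS]big_mkcond big_nat_recr //= -big_mkcond /= pq /= muln1.
Qed.

Lemma Zp_eq_mod M a b : 1 < M -> (a%:R : 'Z_M)%R = b%:R%R -> a = b %[mod M].
Proof. by move=> hM /(congr1 val); rewrite /= !val_Zp_nat. Qed.

Lemma Zp_dvd0 M a : 1 < M -> M %| a -> (a%:R : 'Z_M)%R = 0%R.
Proof. by move=> hM hd; apply: val_inj; rewrite /= val_Zp_nat // (eqP hd). Qed.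

Lemma modn_cancel a b c d : coprime c d -> a * c = b * c %[mod d] -> a = b %[mod d].
Proof.
move=> cop.
wlog le: a b / b <= a.
  move=> H; case: (leqP b a) => [h|h]; first exact: H.
  move=> e; symmetry; apply: H; [exact: ltnW| by symmetry].
move=> /eqP; rewrite eqn_mod_dvd ?leq_mul2r ?le ?orbT // -mulnBl.
by rewrite Gauss_dvdl 1?coprime_sym // -eqn_mod_dvd // => /eqP.
Qed.

Lemma g_coprime p q : prime p -> coprime p (g p q 0).
Proof.
move=> pp; rewrite /g; apply big_ind => //; first by rewrite coprimen1.
  by move=> x y hx hy; rewrite coprimeMr hx hy.
by move=> j hj; rewrite mul0n add0n prime_coprime.
Qed.

Lemma step p L e n m : prime p -> 0 < L -> m <= n ->
  (forall c, g p (L*p) c = g p (L*p) 0 %[mod p^e]) ->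
  'C(n * (L*p), m * (L*p)) = 'C(n*L, m*L) %[mod p^e].
Proof.
move=> pp L0 hmn hg; have p0 := prime_gt0 pp.
set g0 := g p (L*p) 0.
have Ucong c : U p (c*L) = expn g0 c %[mod p^e].
  elim: c => [|c IH]; first by rewrite mul0n /U mul0n big_geq.
  rewrite U_block // expnS mulnC -modnMm IH hg modnMm //.
have rel : 'C(n * (L*p), m * (L*p)) * (U p (m*L) * U p ((n-m)*L)) =
           'C(n*L, m*L) * U p (n*L).
  set a := n*L; set b := m*L.
  have hba : b <= a by rewrite leq_mul2r hmn orbT.
  have hbp : b * p <= a * p by rewrite leq_mul2r hba orbT.
  have e1' := bin_fact hbp.
  rewrite -mulnBl (@fact_split p a p0) (@fact_split p b p0) (@fact_split p (a-b) p0) in e1'.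
  have e2 := bin_fact hba.
  have hab : (n - m) * L = a - b by rewrite mulnBl.
  have pa : p^a = p^b * p^(a-b) by rewrite -expnD subnKC.
  rewrite -e2 pa in e1'.
  have K0 : 0 < p^b * p^(a-b) * (b`! * (a-b)`!) by rewrite !muln_gt0 !expn_gt0 p0 !fact_gt0.
  apply/eqP; rewrite -(eqn_pmul2l K0); apply/eqP.
  rewrite hab !mulnA -[n * L * p]mulnA -[m * L * p]mulnA -/a -/b.
  rewrite (mulnA n L p) (mulnA m L p) -/a -/b.
  transitivity ('C(a*p,b*p) * (p^b*b`!*U p b*(p^(a-b)*(a-b)`!*U p (a-b)))); first ring.
  rewrite e1'; ring.
have h1 : g0^m * g0^(n-m) = U p (m*L) * U p ((n-m)*L) %[mod p^e].
  by rewrite -modnMm -(Ucong m) -(Ucong (n-m)) modnMm.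
have cop : coprime (g0^n) (p^e).
  by rewrite coprimeXl // coprime_sym coprimeXl // g_coprime.
apply: (modn_cancel cop).
have en : g0^n = g0^m * g0^(n-m) by rewrite -expnD subnKC.
rewrite {1}en -modnMmr h1 modnMmr rel -modnMmr Ucong modnMmr //.
Qed.

Lemma g_sq p q c : p %| q -> (g p q c)^2 =
  \prod_(1 <= j < q | ~~ (p %| j)) (j * (q - j) + q^2 * (c * (c+1))).
Proof.
move=> pq; rewrite (_ : g p q c ^ 2 = g p q c * g p q c) // {2}/g big_nat_rev /=.
have -> : \prod_(1 <= i < q | ~~ (p %| (1 + q - i.+1))) (c*q + (1 + q - i.+1)) =
          \prod_(1 <= i < q | ~~ (p %| i)) (c*q + (q - i)).
  rewrite big_nat_cond [RHS]big_nat_cond; apply: eq_big => i; rewrite add1n subSS //.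
  by case: (boolP (1 <= i < q)) => //= /andP[_ /ltnW hi]; rewrite dvdn_subr.
rewrite /g -big_split /= big_nat_cond [RHS]big_nat_cond.
apply: eq_bigr => j /andP[/andP[_ hj] _].
have [r ->] : exists r, q = j + r by exists (q - j); rewrite subnKC // ltnW.
rewrite addKn; ring.
Qed.

Lemma g_modq p q c : 1 < q -> g p q c = g p q 0 %[mod q].
Proof.
move=> q1; apply: (@Zp_eq_mod q) => //.
rewrite /g !natr_prod; apply: eq_bigr => j _.
by rewrite natrD natrM (Zp_dvd0 q1 (dvdnn q)) mulr0 add0r mul0n add0n.
Qed.

Lemma g_mono p q c : g p q 0 <= g p q c.
Proof. by apply: leq_prod => j _; rewrite mul0n add0n leq_addl. Qed.

Lemma inv_close (R : comUnitRingType) (x y Q t : R) :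
  x \is a GRing.unit -> y \is a GRing.unit -> (Q ^+ 3 = 0)%R -> x = (y + Q * t)%R ->
  (Q ^+ 2 * x^-1 = Q ^+ 2 * y^-1)%R.
Proof.
move=> ux uy Q3 ex; apply/eqP; rewrite -subr_eq0; apply/eqP.
have hx := mulrV ux; have hy := mulrV uy.
transitivity (Q^+2 * x^-1 * (1 - y*y^-1) - Q^+2*y^-1*(1 - x*x^-1) - Q^+3*t*x^-1*y^-1)%R.
  rewrite ex; ring.
by rewrite hx hy Q3 !subrr !(mulr0, mul0r, subr0).
Qed.

Lemma ex_gen (R : comRingType) (J K S Q : R) : S = (2%:R * J - K * Q)%R ->
  (S * (Q - S) = 4%:R * (J * (Q - J)) + Q * (- (2%:R * J) - K * Q + 4%:R * J * K - K ^+ 2 * Q))%R.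
Proof. by move=> ->; ring. Qed.

Lemma three_gen (R : comRingType) (X : R) : (X * 3%:R = X * 4%:R - X)%R.
Proof. by ring. Qed.

Section Key.
Variables (p i q : nat).
Hypotheses (pp : prime p) (p5 : 5 <= p) (hq : q = p ^ i.+1).
Local Notation R := 'Z_(q^3).

Lemma q1 : 1 < q.
Proof. by rewrite hq -{1}(expn0 p) ltn_exp2l ?prime_gt1. Qed.
Lemma q31 : 1 < q^3.
Proof. rewrite expnS; apply: (leq_trans q1); rewrite leq_pmulr // expn_gt0 (ltnW q1) //. Qed.
Lemma pq : p %| q.
Proof. by rewrite hq dvdn_exp. Qed.

Lemma copq m : coprime (q^3) m = ~~ (p %| m).
Proof. by rewrite coprime_pexpl // hq coprime_pexpl // prime_coprime. Qed.

Lemma unitA j : j < q -> ~~ (p %| j)%N -> (((j * (q - j))%:R : R) \is a GRing.unit)%R.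
Proof.
move=> jq pj; rewrite (unitZpE _ q31).
rewrite copq.
rewrite (Euclid_dvdM _ _ pp) negb_or pj /=.
by rewrite (dvdn_subr (ltnW jq) pq).
Qed.

Local Open Scope ring_scope.
Lemma keyS : (((q%:R : R) ^+ 2 * \sum_(1 <= j < q | ~~ (p %| j)%N) ((j * (q - j))%N%:R : R)^-1) = 0)%R.
Proof.
have q0 : (0 < q)%N := ltnW q1.
set Q := (q%:R : R).
have Q3 : (Q ^+ 3 = 0)%R by rewrite -natrX (Zp_dvd0 q31 (dvdnn _)).
pose F j := (((j*(q-j))%N%:R : R)^-1).
have E1 : (\sum_(1 <= j < q | ~~ (p %| j)%N) F j = \sum_(j < q | ~~ (p %| j)%N) F j)%R.
  by rewrite -(big_mkord (fun j => ~~ (p %| j)%N) F) (big_ltn_cond q0) dvdn0.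
rewrite E1.
have cop2 : coprime 2%N q.
  rewrite hq coprime_pexpr // coprime_sym (prime_coprime _ pp) gtnNdvd //.
  by apply: (leq_trans _ p5).
pose sg (j : 'I_q) : 'I_q := Ordinal (ltn_pmod (2 * j)%N q0).
have sgi : injective sg.
  move=> a b /(congr1 val) /= h; apply: val_inj => /=.
  have : (a = b %[mod q])%N.
    by apply: (modn_cancel cop2); rewrite !(mulnC _ 2).
  by rewrite !modn_small.
have Pg j : (p %| sg j)%N = (p %| j)%N.
  rewrite /= /dvdn (modn_dvdm _ pq) -/(dvdn p (2*j)%N) (Euclid_dvdM _ _ pp).
  by rewrite (gtnNdvd (isT : (0 < 2)%N) (leq_trans _ p5)).
have u4 : ((4%:R : R) \is a GRing.unit)%R.
  rewrite (unitZpE _ q31) copq gtnNdvd //.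
have u3 : ((3%:R : R) \is a GRing.unit)%R.
  rewrite (unitZpE _ q31) copq gtnNdvd //; exact: (leq_trans _ p5).
rewrite mulr_sumr.
set X := \sum_(j < q | _) _.
have hX : X = X * (4%:R)^-1.
  rewrite {1}/X (reindex_inj sgi) /= mulr_suml.
  apply: eq_big => j; first by rewrite Pg.
  move=> pj; rewrite /F.
  have jq := ltn_ord j.
  have pjj : ~~ (p %| j)%N by rewrite -Pg.
  have ux := unitA (ltn_ord (sg j)) pj.
  have uA := unitA jq pjj.
  set k := ((2*j) %/ q)%N.
  have e : ((2*j)%N%:R : R) = k%:R * Q + ((2*j) %% q)%N%:R by rewrite -natrM -natrD -divn_eq.
  have hs : (((2*j) %% q)%N%:R : R) = ((2*j)%N%:R : R) - k%:R * Q by rewrite e [k%:R * Q + _]addrC addrK.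
  have ex : ((sg j * (q - sg j))%N%:R : R) = 4%:R * (j * (q - j))%N%:R +
     Q * (- (2%:R * (j:nat)%:R) - k%:R * Q + 4%:R * (j:nat)%:R * k%:R - k%:R ^+ 2 * Q).
    rewrite !natrM (natrB _ (ltnW (ltn_ord (sg j)))) (natrB _ (ltnW jq)).
    apply: ex_gen; rewrite natrM in hs; exact: hs.
  have uy : ((4%:R * (j * (q - j))%N%:R : R) \is a GRing.unit) by rewrite unitrM u4 uA.
  by rewrite (inv_close ux uy Q3 ex) invrM // mulrA.
have h4 : X * 4%:R = X by rewrite {1}hX -mulrA mulVr // mulr1.
have h3 : X * 3%:R = 0.
  by rewrite three_gen h4 subrr.
by apply: (mulIr u3); rewrite h3 mul0r.
Qed.

Lemma g_sq3 c : ((g p q c)^2 = (g p q 0)^2 %[mod q^3])%N.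
Proof.
apply: (Zp_eq_mod q31); rewrite (g_sq c pq) (g_sq 0 pq) mul0n muln0 !natr_prod.
rewrite big_nat_cond [RHS]big_nat_cond.
under [RHS]eq_bigr => j _ do rewrite addn0.
set eps := (((q^2) * (c * (c+1)))%N%:R : R).
have e1 : \prod_(1 <= j < q | (1 <= j < q)%N && ~~ (p %| j)%N) ((j * (q - j) + q ^ 2 * (c * (c + 1)))%N%:R : R)
   = \prod_(1 <= j < q | (1 <= j < q)%N && ~~ (p %| j)%N) ((j * (q - j))%N%:R + eps).
  by apply: eq_bigr => j _; rewrite natrD.
rewrite e1 prod_eps.
- rewrite -[X in eps * X]big_nat_cond.
  have -> : eps * \sum_(1 <= j < q | ~~ (p %| j)%N) ((j * (q - j))%N%:R : R)^-1 = 0.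
    by rewrite /eps natrM natrX (mulrC (_ ^+ 2)) -mulrA keyS mulr0.
  by rewrite addr0 mulr1.
- rewrite /eps -natrM; apply: (Zp_dvd0 q31).
  by rewrite mulnACA dvdn_mulr // -expnD dvdn_exp2l.
- by move=> j /andP[/andP[_ jq] pj]; exact: unitA.
Qed.
End Key.

Lemma g_sq2 p q c : p %| q -> 1 < q -> g p q c ^ 2 = g p q 0 ^ 2 %[mod q ^ 2].
Proof.
move=> pq q1; have q21 : 1 < q ^ 2 by rewrite (leq_trans q1) // leq_pmulr // ltnW.
apply: (Zp_eq_mod q21); rewrite (g_sq c pq) (g_sq 0 pq) mul0n muln0 !natr_prod.
apply: eq_bigr => j _; rewrite !natrD (Zp_dvd0 q21 (dvdn_mulr _ (dvdnn _))).
by rewrite (Zp_dvd0 q21 (dvdn0 _)).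
Qed.

Lemma mod_dvd_down a b d1 d2 : d1 %| d2 -> a = b %[mod d2] -> a = b %[mod d1].
Proof. by move=> hd h; rewrite -(modn_dvdm a hd) -(modn_dvdm b hd) h. Qed.

Lemma root_odd p k x y : prime p -> p != 2 -> y <= x -> x = y %[mod p] -> coprime p y ->
  x ^ 2 = y ^ 2 %[mod p ^ k] -> x = y %[mod p ^ k].
Proof.
move=> pp p2 yx hxy cy.
have yx2 : y ^ 2 <= x ^ 2 by rewrite leq_exp2r.
move/eqP; rewrite eqn_mod_dvd // subn_sqr => hd; apply/eqP; rewrite eqn_mod_dvd //.
move: hd; rewrite Gauss_dvdl // coprimeXl // (prime_coprime _ pp).
move/eqP: hxy; rewrite eqn_mod_dvd // => hpd.
have -> : x + y = (x - y) + 2 * y by lia.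
rewrite dvdn_addr // Euclid_dvdM // negb_or -(prime_coprime y pp) cy andbT.
apply/negP => /(dvdn_leq (isT : 0 < 2)); rewrite leq_eqVlt.
case/orP; first by move/eqP=> e; rewrite e eqxx in p2.
by rewrite ltnS leqNgt prime_gt1.
Qed.

Lemma root_two n x y : y <= x -> x = y %[mod 4] -> odd y ->
  x ^ 2 = y ^ 2 %[mod 2 ^ n.+1] -> x = y %[mod 2 ^ n].
Proof.
move=> yx h4 oy.
have yx2 : y ^ 2 <= x ^ 2 by rewrite leq_exp2r.
move/eqP; rewrite eqn_mod_dvd // subn_sqr => hd; apply/eqP; rewrite eqn_mod_dvd //.
move/eqP: h4; rewrite eqn_mod_dvd // => /dvdnP [t ht].
have e : x + y = 2 * (2 * t + y) by lia.
rewrite e mulnCA expnS dvdn_pmul2l // in hd.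
move: hd; rewrite Gauss_dvdl // coprimeXl // (prime_coprime _ (isT : prime 2)).
by rewrite dvdn2 oddD oddM /= oy.
Qed.

Lemma q_gt1 p i : prime p -> 1 < p ^ i * p.
Proof. by move=> pp; rewrite (leq_trans (prime_gt1 pp)) // leq_pmull // expn_gt0 prime_gt0. Qed.

Lemma blk_odd p i e c : prime p -> p != 2 ->
  g p (p^i*p) c ^ 2 = g p (p^i*p) 0 ^ 2 %[mod p ^ e] ->
  g p (p^i*p) c = g p (p^i*p) 0 %[mod p ^ e].
Proof.
move=> pp p2; apply: root_odd => //; first exact: g_mono.
  by apply: (mod_dvd_down (dvdn_mull _ (dvdnn p))); apply: g_modq; exact: q_gt1.
exact: g_coprime.
Qed.

Lemma blk5 p i c : prime p -> 5 <= p ->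
  g p (p^i*p) c = g p (p^i*p) 0 %[mod p ^ (3 * i.+1)].
Proof.
move=> pp p5; apply: blk_odd => //; first by case: eqP p5 => // ->.
have hq : p ^ i * p = p ^ i.+1 by rewrite expnSr.
rewrite [3 * _]mulnC expnM -hq; exact: (g_sq3 pp p5 hq).
Qed.

Lemma blk3 i c : g 3 (3^i*3) c = g 3 (3^i*3) 0 %[mod 3 ^ (2 * i.+1)].
Proof.
apply: blk_odd => //.
rewrite [2 * _]mulnC expnM [3 ^ i.+1]expnSr; apply: g_sq2; first by rewrite dvdn_mull.
exact: (q_gt1 i (isT : prime 3)).
Qed.

Lemma blk2 i c : g 2 (2^i*2) c = g 2 (2^i*2) 0 %[mod 2 ^ (2 * i).+1].
Proof.
have q1 := q_gt1 i (isT : prime 2).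
case: i q1 => [|i] q1.
  by rewrite expn0 mul1n (_ : 2 ^ (2 * 0).+1 = 2) //; apply: g_modq.
apply: root_two; first exact: g_mono.
- apply: (mod_dvd_down (_ : 4 %| 2^i.+1*2)); last by apply: g_modq.
  by rewrite expnS mulnC mulnA dvdn_mulr.
- have := g_coprime (2^i.+1*2) (isT : prime 2).
  by rewrite (prime_coprime _ (isT : prime 2)) dvdn2 negbK.
rewrite (_ : (2 * i.+1).+2 = 2 * i.+2); last by lia.
rewrite [2 * _]mulnC expnM [2 ^ i.+2]expnSr.
by apply: g_sq2; first by rewrite dvdn_mull.
Qed.

Lemma chain p n m j K E : prime p -> m <= n -> (forall i, j <= i -> K <= E i) ->
  (forall i c, g p (p^i*p) c = g p (p^i*p) 0 %[mod p ^ (E i)]) ->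
  forall d, 'C(n * p^(j+d), m * p^(j+d)) = 'C(n * p^j, m * p^j) %[mod p ^ K].
Proof.
move=> pp hmn hE hg; elim => [|d IH]; first by rewrite addn0.
have L0 : 0 < p ^ (j + d) by rewrite expn_gt0 prime_gt0.
have h := mod_dvd_down (dvdn_exp2l p (hE _ (leq_addr d j)))
  (step pp L0 hmn (hg (j + d))).
by rewrite addnS expnSr h IH.
Qed.

Theorem mainTheorem2 (n m k : nat) (hmn : m <= n) (hk : 1 <= k) :
  (forall p : nat, prime p -> 3 < p ->
     'C(n * p ^ k, m * p ^ k) =
     'C(n * p ^ ((k - 1) %/ 3), m * p ^ ((k - 1) %/ 3)) %[mod p ^ k])
  /\ 'C(n * 2 ^ k, m * 2 ^ k) =
     'C(n * 2 ^ (k %/ 2), m * 2 ^ (k %/ 2)) %[mod 2 ^ k]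
  /\ 'C(n * 3 ^ k, m * 3 ^ k) =
     'C(n * 3 ^ ((k - 1) %/ 2), m * 3 ^ ((k - 1) %/ 2)) %[mod 3 ^ k].
Proof.
split; [|split].
- move=> p pp p3.
  have p5 : 4 < p.
    by rewrite ltn_neqAle p3 andbT; apply/eqP => e; rewrite -e in pp.
  have hE : forall i, (k-1) %/ 3 <= i -> k <= 3 * i.+1 by move=> i hi; lia.
  have H := chain pp hmn hE (fun i c => blk5 i c pp p5) (k - (k-1) %/ 3).
  by rewrite subnKC in H; last by lia.
- have hE : forall i, k %/ 2 <= i -> k <= (2 * i).+1 by move=> i hi; lia.
  have H := chain (isT : prime 2) hmn hE blk2 (k - k %/ 2).
  by rewrite subnKC in H; last by lia.
- have hE : forall i, (k-1) %/ 2 <= i -> k <= 2 * i.+1 by move=> i hi; lia.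
  have H := chain (isT : prime 3) hmn hE blk3 (k - (k-1) %/ 2).
  by rewrite subnKC in H; last by lia.
Qed.
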